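(* For any rooted binary phylogenetic tree $T$ under the $N_r$ model, $RA_{\rm MP}(T)\ge\frac1r$. Moreover, if $p_e<\frac{r-1}{r}$ for every edge $e$, then $RA_{\rm MP}(T)>\frac1r$.
   Context: A rooted binary phylogenetic tree is a finite tree with a distinguished root vertex $\rho$ of out-degree 2, all edges directed away from $\rho$, and every other vertex of in-degree 1 and out-degree 0 or 2; out-degree-0 vertices are leaves, forming the leaf set $X$. Under the Neyman $r$-state model $N_r$ ($r\ge2$) on a state set $\mathcal A$ of size $r$, each edge $e$ carries a substitution probability $p_e\in[0,\frac{r-1}{r}]$; given $F(\rho)$, states propagate independently along edges: for an edge $(u,v)$, $F(v)=F(u)$ with probability $1-p_e$, and otherwise $F(v)$ is uniform among the $r-1$ other states; $f=F|_X$. Fitch sets: each leaf $x$ gets $\{f(x)\}$; a vertex with children $v_1,v_2$ gets $\mathrm{FS}(v_1)\cap\mathrm{FS}(v_2)$ if nonempty, else the union. $\mathrm{MP}(f,T)$ is a uniformly random element of the Fitch set of $\rho$, and $RA_{\rm MP}(T)=\mathbb P(\mathrm{MP}(f,T)=\alpha\mid F(\rho)=\alpha)$. *)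

(* Defs.v *)
From HB Require Import structures.
From mathcomp Require Import all_boot all_order all_algebra.
Set Implicit Arguments. Unset Strict Implicit. Unset Printing Implicit Defensive.
Import Order.TTheory GRing.Theory Num.Theory.
Local Open Scope ring_scope.

(* A rooted binary tree whose edges carry substitution probabilities:
   [PNode pl tl pr tr] is a vertex with two children; [pl] is the
   substitution probability of the edge to the root of [tl], [pr] that of
   the edge to the root of [tr].  [PLeaf] is a leaf. *)
Inductive ptree (R : Type) := PLeaf | PNode of R & ptree R & R & ptree R.
Arguments PLeaf {R}.

Definition is_node R (t : ptree R) : bool :=
  if t is PNode _ _ _ _ then true else false.

Fixpoint all_edges R (P : R -> Prop) (t : ptree R) : Prop :=
  match t with
  | PLeaf => True
  | PNode pl tl pr tr => [/\ P pl, P pr, all_edges P tl & all_edges P tr]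
  end.

(* An assignment of states (in A) to all vertices of a tree. *)
Inductive ltree (A : Type) := LLeaf of A | LNode of A & ltree A & ltree A.

Definition lroot A (L : ltree A) : A :=
  match L with LLeaf a => a | LNode a _ _ => a end.

(* All state assignments F : V(t) -> A on the vertices of t (duplicate-free). *)
Fixpoint labs R (A : finType) (t : ptree R) : seq (ltree A) :=
  match t with
  | PLeaf => [seq LLeaf a | a <- enum A]
  | PNode _ tl _ tr =>
      flatten [seq [seq LNode a x y | x <- labs A tl, y <- labs A tr] | a <- enum A]
  end.

Section Nr.
Variable R : realFieldType.
Variable r : nat.

Definition trans (p : R) (a b : 'I_r) : R :=
  if a == b then 1 - p else p / (r.-1)%:R.

(* Probability of the full vertex assignment L given the root state lroot L:
   product over edges (u,v) of P(F(v) | F(u)). *)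
Fixpoint weight (t : ptree R) (L : ltree 'I_r) : R :=
  match t, L with
  | PLeaf, LLeaf _ => 1
  | PNode pl tl pr tr, LNode a x y =>
      trans pl a (lroot x) * trans pr a (lroot y) * weight tl x * weight tr y
  | _, _ => 0
  end.

(* Fitch set of the root, computed from the leaf states of L only. *)
Fixpoint fitch (L : ltree 'I_r) : {set 'I_r} :=
  match L with
  | LLeaf a => [set a]
  | LNode _ x y =>
      let S1 := fitch x in let S2 := fitch y in
      if S1 :&: S2 != set0 then S1 :&: S2 else S1 :|: S2
  end.

(* RA_MP(T) = P(MP(f,T) = alpha | F(rho) = alpha), MP(f,T) uniform on the
   Fitch set of the root. *)
Definition RA_MP (t : ptree R) (alpha : 'I_r) : R :=
  \sum_(L <- labs 'I_r t | lroot L == alpha)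
     weight t L * (if alpha \in fitch L then (#|fitch L|%:R)^-1 else 0).
End Nr.
Arguments RA_MP {R} r t alpha.

(* Main.v *)
Require Import Defs.
From HB Require Import structures.
From mathcomp Require Import all_boot all_order all_algebra all_fingroup.
From mathcomp Require Import ring lra.
Import Order.TTheory GRing.Theory Num.Theory.
Local Open Scope ring_scope.

Section Pf.
Variable R : realFieldType.
Variable r : nat.
Implicit Types (S X : {set 'I_r}) (a b c : 'I_r) (p : R) (t : ptree R).

Definition comb (S1 S2 : {set 'I_r}) : {set 'I_r} :=
  if S1 :&: S2 != set0 then S1 :&: S2 else S1 :|: S2.

Definition Qm (p : R) (D : 'I_r -> {set 'I_r} -> R) (a : 'I_r) (S : {set 'I_r}) : R :=
  \sum_b trans p a b * D b S.

Fixpoint Dd (t : ptree R) (a : 'I_r) (S : {set 'I_r}) {struct t} : R :=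
  match t with
  | PLeaf => (S == [set a])%:R
  | PNode pl tl pr tr => \sum_(S1 : {set 'I_r}) \sum_(S2 : {set 'I_r})
      Qm pl (Dd tl) a S1 * Qm pr (Dd tr) a S2 * (comb S1 S2 == S)%:R
  end.

Lemma sum_set1 (G : {set 'I_r} -> R) X :
  \sum_(S : {set 'I_r}) (S == X)%:R * G S = G X.
Proof.
rewrite (bigD1 X) //= eqxx mul1r big1 ?addr0 // => S /negPf ->; by rewrite mul0r.
Qed.

Lemma sum_eqr (G : {set 'I_r} -> R) X :
  \sum_(S : {set 'I_r}) G S * (X == S)%:R = G X.
Proof.
rewrite (bigD1 X) //= eqxx mulr1 big1 ?addr0 // => S; rewrite eq_sym => /negPf ->; by rewrite mulr0.
Qed.

Lemma D_labs t (F : 'I_r -> {set 'I_r} -> R) :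
  \sum_(L <- labs 'I_r t) weight t L * F (lroot L) (fitch L) =
  \sum_b \sum_(S : {set 'I_r}) Dd t b S * F b S.
Proof.
elim: t F => [|pl tl IHl pr tr IHr] F /=.
  rewrite big_map big_enum /=; apply: eq_bigr => b _.
  by rewrite mul1r (eq_bigr (fun S => (S == [set b])%:R * F b S)) ?sum_set1.
rewrite big_flatten big_map big_enum /=; apply: eq_bigr => a _.
rewrite big_allpairs_dep /=.
transitivity (\sum_(x <- labs 'I_r tl) weight tl x * (trans pl a (lroot x) *
   \sum_(y <- labs 'I_r tr) weight tr y * (trans pr a (lroot y) * F a (comb (fitch x) (fitch y))))).
  apply: eq_bigr => x _; rewrite mulr_sumr mulr_sumr /=; apply: eq_bigr => y _.
  rewrite /comb; set Z := F a _; ring.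
rewrite [LHS](eq_bigr (fun x => weight tl x * (trans pl a (lroot x) * \sum_c \sum_(S2 : {set 'I_r}) Dd tr c S2 * (trans pr a c * F a (comb (fitch x) S2))))); last first.
  by move=> x _; rewrite (IHr (fun c S2 => trans pr a c * F a (comb (fitch x) S2))).
rewrite (IHl (fun b S1 => trans pl a b * \sum_c \sum_(S2 : {set 'I_r}) Dd tr c S2 * (trans pr a c * F a (comb S1 S2)))).
pose G b S1 c S2 := trans pl a b * Dd tl b S1 * (trans pr a c * Dd tr c S2) * F a (comb S1 S2).
transitivity (\sum_b \sum_(S1 : {set 'I_r}) \sum_c \sum_(S2 : {set 'I_r}) G b S1 c S2).
  apply: eq_bigr => b _; apply: eq_bigr => S1 _; rewrite !mulr_sumr; apply: eq_bigr => c _.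
  rewrite /= !mulr_sumr; apply: eq_bigr => S2 _; rewrite /G; ring.
symmetry.
transitivity (\sum_(S1 : {set 'I_r}) \sum_(S2 : {set 'I_r}) Qm pl (Dd tl) a S1 * Qm pr (Dd tr) a S2 * F a (comb S1 S2)).
  under eq_bigr => S _ do rewrite mulr_suml.
  rewrite exchange_big /=; apply: eq_bigr => S1 _.
  under eq_bigr => S _ do rewrite mulr_suml.
  rewrite exchange_big /=; apply: eq_bigr => S2 _.
  rewrite -(sum_eqr (fun S => Qm pl (Dd tl) a S1 * Qm pr (Dd tr) a S2 * F a S) (comb S1 S2)).
  apply: eq_bigr => S _ /=; ring.
transitivity (\sum_(S1 : {set 'I_r}) \sum_b \sum_(S2 : {set 'I_r}) \sum_c G b S1 c S2).
  apply: eq_bigr => S1 _; rewrite exchange_big /=; apply: eq_bigr => S2 _.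
  rewrite /Qm mulr_suml mulr_suml /=; apply: eq_bigr => b _.
  rewrite !mulr_sumr !mulr_suml /=; apply: eq_bigr => c _; rewrite /G; ring.
rewrite exchange_big /=; apply: eq_bigr => b _; apply: eq_bigr => S1 _.
by rewrite exchange_big.
Qed.


Lemma imsI (s : {perm 'I_r}) : injective (fun A : {set 'I_r} => [set s x | x in A]).
Proof. exact: imset_inj perm_inj. Qed.

Lemma comb_perm (s : {perm 'I_r}) (S1 S2 : {set 'I_r}) :
  comb (s @: S1) (s @: S2) = s @: comb S1 S2.
Proof.
rewrite /comb -imsetI ?imset_eq0; last by move=> x y _ _; apply: perm_inj.
by case: ifP => _ //; rewrite imsetU.
Qed.

Lemma Qm_perm (s : {perm 'I_r}) p D a S :
  (forall b S, D (s b) (s @: S) = D b S) ->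
  Qm p D (s a) (s @: S) = Qm p D a S.
Proof.
move=> HD; rewrite /Qm (reindex_inj (@perm_inj _ s)) /=; apply: eq_bigr => b _.
by rewrite HD /trans (inj_eq perm_inj).
Qed.

Lemma Dd_perm (s : {perm 'I_r}) t a S : Dd t (s a) (s @: S) = Dd t a S.
Proof.
elim: t a S => [|pl tl IHl pr tr IHr] a S /=.
  by rewrite -imset_set1 (inj_eq (imsI s)).
rewrite (reindex_inj (imsI s)) /=; apply: eq_bigr => S1 _.
rewrite (reindex_inj (imsI s)) /=; apply: eq_bigr => S2 _.
by rewrite !Qm_perm // comb_perm (inj_eq (imsI s)).
Qed.

Lemma sum_trans p a : (1 < r)%N -> \sum_b trans p a b = 1.
Proof.
move=> r1; rewrite (bigD1 a) //= /trans eqxx.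
rewrite (eq_bigr (fun=> p / (r.-1)%:R)); last first.
  by move=> b; rewrite eq_sym => /negbTE ->.
rewrite sumr_const cardC1 card_ord -[X in _ + X]mulr_natr divfK ?subrK //.
by rewrite pnatr_eq0; case: (r) r1 => [|[|n]].
Qed.

Lemma Dd_mass t a : (1 < r)%N -> \sum_(S : {set 'I_r}) Dd t a S = 1.
Proof.
move=> r1; elim: t a => [|pl tl IHl pr tr IHr] a /=.
  rewrite (eq_bigr (fun S => (S == [set a])%:R * (fun=> 1) S)); first by rewrite (sum_set1 (fun=> 1)).
  by move=> S _; rewrite mulr1.
transitivity (\sum_(S1 : {set 'I_r}) \sum_(S2 : {set 'I_r}) Qm pl (Dd tl) a S1 * Qm pr (Dd tr) a S2).
  rewrite exchange_big /=; apply: eq_bigr => S1 _.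
  rewrite exchange_big /=; apply: eq_bigr => S2 _.
  exact: (sum_eqr (fun=> Qm pl (Dd tl) a S1 * Qm pr (Dd tr) a S2) (comb S1 S2)).
have HQ p D : (forall b, \sum_(S : {set 'I_r}) D b S = 1) -> \sum_(S : {set 'I_r}) Qm p D a S = 1.
  move=> HD; rewrite /Qm exchange_big /= -(sum_trans p a r1); apply: eq_bigr => b _.
  by rewrite -mulr_sumr HD mulr1.
by rewrite -big_distrlr /= !HQ ?mulr1.
Qed.

Lemma Dd_set0 t a : Dd t a set0 = 0.
Proof.
elim: t a => [|pl tl IHl pr tr IHr] a /=.
  case: eqP => // /setP /(_ a); by rewrite !inE eqxx.
apply: big1 => S1 _; apply: big1 => S2 _.
case: eqP => [|_]; last by rewrite mulr0.
rewrite /comb; case: ifP => [/negP H E|_ /eqP]; first by rewrite E eqxx in H.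
rewrite setU_eq0 => /andP[/eqP -> _].
by rewrite /Qm big1 ?mul0r // => b _; rewrite IHl mulr0.
Qed.


Local Notation m := ((r.-1)%:R : R).
Local Notation Hp := (fun p : R => 0 <= p <= (r.-1)%:R / r%:R).
Local Notation Hs := (fun p : R => p < (r.-1)%:R / r%:R).

Lemma m_gt0 : (1 < r)%N -> 0 < m.
Proof. by rewrite ltr0n; case: (r) => [|[|n]]. Qed.

Lemma r_eq : (1 < r)%N -> (r%:R : R) = m + 1.
Proof. by move=> r1; rewrite natr1 prednK // ltnW. Qed.

Lemma hp_mul p : (1 < r)%N -> p <= m / r%:R -> p * (m + 1) <= m.
Proof.
move=> r1; rewrite ler_pdivlMr; first by rewrite r_eq.
by rewrite r_eq // ltr_wpDl ?ltr01 // ltW // m_gt0.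
Qed.

Lemma hs_mul p : (1 < r)%N -> p < m / r%:R -> p * (m + 1) < m.
Proof.
move=> r1; rewrite ltr_pdivlMr; first by rewrite r_eq.
by rewrite r_eq // ltr_wpDl ?ltr01 // ltW // m_gt0.
Qed.

Lemma coef_ge0 p : (1 < r)%N -> Hp p -> 0 <= 1 - p - p / m.
Proof.
move=> r1 /andP[p0 /(hp_mul _ r1) h]; have m0 := m_gt0 r1.
have hq : p / m * m = p by rewrite divfK // gt_eqF.
nra.
Qed.

Lemma coef_gt0 p : (1 < r)%N -> Hp p -> Hs p -> 0 < 1 - p - p / m.
Proof.
move=> r1 /andP[p0 _] /(hs_mul _ r1) h; have m0 := m_gt0 r1.
have hq : p / m * m = p by rewrite divfK // gt_eqF.
nra.
Qed.

Lemma trans_ge0 p a b : (1 < r)%N -> Hp p -> 0 <= trans p a b.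
Proof.
move=> r1 /andP[p0 /(hp_mul _ r1) h]; have m0 := m_gt0 r1.
rewrite /trans; case: eqP => _; last by rewrite divr_ge0 // ltW.
rewrite subr_ge0; nra.
Qed.

Lemma mem_tS a b S x : (x \in tperm a b @: S) = (tperm a b x \in S).
Proof. by rewrite -{1}(tpermK a b x) mem_imset //; apply: perm_inj. Qed.

Lemma tS_invol a b S : tperm a b @: (tperm a b @: S) = S.
Proof. by apply/setP => x; rewrite !mem_tS tpermK. Qed.

Lemma tS_fix a b S : (a \in S) = (b \in S) -> tperm a b @: S = S.
Proof. by move=> E; apply/setP => x; rewrite mem_tS; case: tpermP => [->|->|//]. Qed.

Lemma tS1 a b : tperm a b @: [set a] = [set b].
Proof. by rewrite imset_set1 tpermL. Qed.

Definition domin (P : {set 'I_r} -> R) a b :=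
  forall S, a \in S -> b \notin S -> P (tperm a b @: S) <= P S.

Lemma domin_any P a b X : domin P a b -> ~~ ((b \in X) && (a \notin X)) ->
  P (tperm a b @: X) <= P X.
Proof.
move=> H; case Ha: (a \in X); case Hb: (b \in X) => //= _.
- by rewrite tS_fix ?Ha ?Hb.
- by apply: H; rewrite ?Ha ?Hb.
- by rewrite tS_fix ?Ha ?Hb.
Qed.

Lemma Qm_diff p t a b S : a != b ->
  Qm p (Dd t) a S - Qm p (Dd t) a (tperm a b @: S) =
  (1 - p - p / m) * (Dd t a S - Dd t a (tperm a b @: S)).
Proof.
move=> hab; rewrite /Qm -sumrB (bigD1 a) //= (bigD1 b) /=; last by rewrite eq_sym.
rewrite big1 ?addr0; last first.
  move=> c /andP[hcb hca].
  have E : Dd t c (tperm a b @: S) = Dd t c S.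
    by rewrite -{1}(tpermD (x:=a) (y:=b) (z:=c)) 1?eq_sym // Dd_perm.
  by rewrite E subrr.
have Eb1 : Dd t b S = Dd t a (tperm a b @: S).
  by rewrite -{1}(tpermL a b) -{1}(tS_invol a b S) Dd_perm.
have Eb2 : Dd t b (tperm a b @: S) = Dd t a S.
  by rewrite -{1}(tpermL a b) Dd_perm.
rewrite Eb1 Eb2 /trans eqxx (negbTE hab).
set x := Dd t a S; set y := Dd t a _.
ring.
Qed.

Lemma Qm_ge0 p t a S : (1 < r)%N -> Hp p -> (forall b X, 0 <= Dd t b X) -> 0 <= Qm p (Dd t) a S.
Proof.
move=> r1 hp hD; rewrite /Qm sumr_ge0 // => b _; rewrite mulr_ge0 //.
exact: trans_ge0.
Qed.

Lemma Qm_dom p t a b : (1 < r)%N -> Hp p -> a != b -> domin (Dd t a) a b ->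
  domin (Qm p (Dd t) a) a b.
Proof.
move=> r1 hp hab hD S aS bS; rewrite -subr_ge0 Qm_diff //.
by rewrite mulr_ge0 ?coef_ge0 // subr_ge0 hD.
Qed.

Lemma Qm_strict p t a b : (1 < r)%N -> Hp p -> Hs p -> a != b ->
  Dd t a [set b] < Dd t a [set a] ->
  Qm p (Dd t) a [set b] < Qm p (Dd t) a [set a].
Proof.
move=> r1 hp hs hab hD; rewrite -subr_gt0 -(tS1 a b) Qm_diff //.
by rewrite mulr_gt0 ?coef_gt0 // tS1 subr_gt0.
Qed.

Lemma comb_cond (S1 S2 : {set 'I_r}) a b : a \in comb S1 S2 -> b \notin comb S1 S2 ->
  ~~ ((b \in S1) && (a \notin S1)) && ~~ ((b \in S2) && (a \notin S2)).
Proof.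
rewrite /comb; case: ifP => _; rewrite !inE;
  by case: (a \in S1); case: (a \in S2); case: (b \in S1); case: (b \in S2).
Qed.

Lemma node_tau (Q1 Q2 : {set 'I_r} -> R) a b S :
  \sum_(S1 : {set 'I_r}) \sum_(S2 : {set 'I_r}) Q1 S1 * Q2 S2 * (comb S1 S2 == tperm a b @: S)%:R =
  \sum_(S1 : {set 'I_r}) \sum_(S2 : {set 'I_r})
      Q1 (tperm a b @: S1) * Q2 (tperm a b @: S2) * (comb S1 S2 == S)%:R.
Proof.
rewrite (reindex_inj (imsI (tperm a b))); apply: eq_bigr => S1 _.
rewrite (reindex_inj (imsI (tperm a b))); apply: eq_bigr => S2 _.
by rewrite comb_perm (inj_eq (imsI _)).
Qed.

Lemma term_ge0 (Q1 Q2 : {set 'I_r} -> R) a b S (S1 S2 : {set 'I_r}) :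
  (forall X, 0 <= Q1 X) -> (forall X, 0 <= Q2 X) -> domin Q1 a b -> domin Q2 a b ->
  a \in S -> b \notin S ->
  0 <= Q1 S1 * Q2 S2 * (comb S1 S2 == S)%:R -
       Q1 (tperm a b @: S1) * Q2 (tperm a b @: S2) * (comb S1 S2 == S)%:R.
Proof.
move=> h1 h2 d1 d2 aS bS; case: eqP => [E|_]; last by rewrite !mulr0 subrr.
rewrite !mulr1 subr_ge0; rewrite -E in aS bS.
have /andP[c1 c2] := comb_cond _ _ _ _ aS bS.
by apply: ler_pM => //; apply: domin_any.
Qed.

Lemma node_dom (Q1 Q2 : {set 'I_r} -> R) a b :
  (forall X, 0 <= Q1 X) -> (forall X, 0 <= Q2 X) -> domin Q1 a b -> domin Q2 a b ->
  domin (fun S => \sum_(S1 : {set 'I_r}) \sum_(S2 : {set 'I_r}) Q1 S1 * Q2 S2 * (comb S1 S2 == S)%:R) a b.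
Proof.
move=> h1 h2 d1 d2 S aS bS /=; rewrite node_tau -subr_ge0 -sumrB sumr_ge0 // => S1 _.
by rewrite -sumrB sumr_ge0 // => S2 _; apply: term_ge0.
Qed.

Lemma node_strict (Q1 Q2 : {set 'I_r} -> R) a b :
  (forall X, 0 <= Q1 X) -> (forall X, 0 <= Q2 X) -> domin Q1 a b -> domin Q2 a b ->
  a != b -> Q1 [set b] < Q1 [set a] -> Q2 [set b] < Q2 [set a] ->
  \sum_(S1 : {set 'I_r}) \sum_(S2 : {set 'I_r}) Q1 S1 * Q2 S2 * (comb S1 S2 == [set b])%:R <
  \sum_(S1 : {set 'I_r}) \sum_(S2 : {set 'I_r}) Q1 S1 * Q2 S2 * (comb S1 S2 == [set a])%:R.
Proof.
move=> h1 h2 d1 d2 hab s1 s2.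
have aS : a \in [set a] by rewrite set11.
have bS : b \notin [set a] by rewrite inE eq_sym.
rewrite -{1}(tS1 a b) node_tau -subr_gt0 -sumrB.
under eq_bigr => S1 _ do rewrite -sumrB.
rewrite (bigD1 [set a]) //= (bigD1 [set a]) //=.
have caa : comb [set a] [set a] = [set a] by rewrite /comb setIid setUid; case: ifP.
set A := (X in 0 < X + _ + _).
have r1 : 0 <= \sum_(S2 : {set 'I_r} | S2 != [set a])
   (Q1 [set a] * Q2 S2 * (comb [set a] S2 == [set a])%:R -
    Q1 (tperm a b @: [set a]) * Q2 (tperm a b @: S2) * (comb [set a] S2 == [set a])%:R).
  by rewrite sumr_ge0 // => S2 _; apply: term_ge0.
have r2 : 0 <= \sum_(S1 : {set 'I_r} | S1 != [set a]) \sum_(S2 : {set 'I_r})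
   (Q1 S1 * Q2 S2 * (comb S1 S2 == [set a])%:R -
    Q1 (tperm a b @: S1) * Q2 (tperm a b @: S2) * (comb S1 S2 == [set a])%:R).
  by rewrite sumr_ge0 // => S1 _; rewrite sumr_ge0 // => S2 _; apply: term_ge0.
have hA : 0 < A.
  rewrite /A caa eqxx !mulr1 tS1.
  have := h1 [set b]; have := h2 [set b]; nra.
lra.
Qed.


Lemma Dd_ge0 t : (1 < r)%N -> all_edges Hp t -> forall a S, 0 <= Dd t a S.
Proof.
move=> r1; elim: t => [|pl tl IHl pr tr IHr] /=; first by move=> _ a S; rewrite ler0n.
case=> hl hr etl etr a S; rewrite sumr_ge0 // => S1 _; rewrite sumr_ge0 // => S2 _.
have q1 := Qm_ge0 pl tl a S1 r1 hl (IHl etl).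
have q2 := Qm_ge0 pr tr a S2 r1 hr (IHr etr).
by rewrite !mulr_ge0 ?ler0n.
Qed.

Lemma Dd_dom t : (1 < r)%N -> all_edges Hp t -> forall a b, a != b -> domin (Dd t a) a b.
Proof.
move=> r1; elim: t => [|pl tl IHl pr tr IHr] /=.
  move=> _ a b hab S aS bS /=; case: eqP => [E|_]; last by rewrite ler_nat.
  have HS : S = [set b] by rewrite -(tS_invol a b S) E tS1.
  by move: aS; rewrite HS inE (negbTE hab).
case=> hl hr etl etr a b hab S aS bS.
have g1 X := Qm_ge0 pl tl a X r1 hl (Dd_ge0 tl r1 etl).
have g2 X := Qm_ge0 pr tr a X r1 hr (Dd_ge0 tr r1 etr).
simpl; exact: (node_dom _ _ _ _ g1 g2 (Qm_dom pl tl a b r1 hl hab (IHl etl a b hab))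
          (Qm_dom pr tr a b r1 hr hab (IHr etr a b hab)) S aS bS).
Qed.

Lemma Dd_strict t : (1 < r)%N -> all_edges Hp t -> all_edges Hs t ->
  forall a b, a != b -> Dd t a [set b] < Dd t a [set a].
Proof.
move=> r1; elim: t => [|pl tl IHl pr tr IHr] /=.
  move=> _ _ a b hab; rewrite eqxx.
  rewrite (inj_eq set1_inj) eq_sym (negbTE hab).
  by rewrite ltr_nat.
case=> hl hr etl etr [sl sr stl str] a b hab.
have g1 X := Qm_ge0 pl tl a X r1 hl (Dd_ge0 tl r1 etl).
have g2 X := Qm_ge0 pr tr a X r1 hr (Dd_ge0 tr r1 etr).
simpl; exact: (node_strict _ _ _ _ g1 g2 (Qm_dom pl tl a b r1 hl hab (Dd_dom tl r1 etl a b hab))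
          (Qm_dom pr tr a b r1 hr hab (Dd_dom tr r1 etr a b hab)) hab
          (Qm_strict pl tl a b r1 hl sl hab (IHl etl stl a b hab))
          (Qm_strict pr tr a b r1 hr sr hab (IHr etr str a b hab))).
Qed.

Definition gg (x : 'I_r) (S : {set 'I_r}) : R := if x \in S then #|S|%:R^-1 else 0.

Lemma RA_E t (al : 'I_r) : RA_MP r t al = \sum_(S : {set 'I_r}) Dd t al S * gg al S.
Proof.
rewrite /RA_MP big_mkcond /=.
rewrite (eq_bigr (fun L => weight t L * ((lroot L == al)%:R * gg al (fitch L)))); last first.
  by move=> L _; rewrite /gg; case: eqP => _ /=; rewrite ?mul1r ?mul0r ?mulr0.
rewrite (D_labs t (fun b S => (b == al)%:R * gg al S)).
rewrite (bigD1 al) //= [X in _ + X]big1 ?addr0; last first.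
  by move=> b hb; apply: big1 => S _; rewrite (negbTE hb) mul0r mulr0.
by apply: eq_bigr => S _; rewrite eqxx mul1r.
Qed.

Lemma sumE t al : (1 < r)%N -> \sum_x \sum_(S : {set 'I_r}) Dd t al S * gg x S = 1.
Proof.
move=> r1; rewrite exchange_big /= -(Dd_mass t al r1); apply: eq_bigr => S _.
rewrite -mulr_sumr /gg -big_mkcond /= sumr_const.
have [->|/eqP nz] := eqVneq S set0; first by rewrite Dd_set0 !mul0r.
rewrite -[X in _ * X]mulr_natr mulVf ?mulr1 // pnatr_eq0 cards_eq0; exact/eqP.
Qed.

Lemma g_tau al be S : gg al (tperm al be @: S) = gg be S /\ gg be (tperm al be @: S) = gg al S.
Proof.
rewrite /gg !mem_tS tpermL tpermR card_imset //; exact: perm_inj.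
Qed.

Lemma twoDelta (D : {set 'I_r} -> R) al be :
  let Dl := \sum_(S : {set 'I_r}) D S * gg al S - \sum_(S : {set 'I_r}) D S * gg be S in
  Dl + Dl = \sum_(S : {set 'I_r}) (D S - D (tperm al be @: S)) * (gg al S - gg be S).
Proof.
move=> Dl.
have h1 : Dl = \sum_(S : {set 'I_r}) D S * (gg al S - gg be S).
  by rewrite /Dl -sumrB; apply: eq_bigr => S _; rewrite mulrBr.
have h2 : \sum_(S : {set 'I_r}) D S * (gg al S - gg be S) =
          \sum_(S : {set 'I_r}) D (tperm al be @: S) * (gg be S - gg al S).
  rewrite (reindex_inj (imsI (tperm al be))); apply: eq_bigr => S _ /=.
  by case: (g_tau al be S) => -> ->.
rewrite h1 {1}h2 -big_split /=; apply: eq_bigr => S _.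
set u := D S; set v := D _; set x := gg al S; set y := gg be S; ring.
Qed.

Lemma gg_ge0 x S : 0 <= gg x S.
Proof. by rewrite /gg; case: ifP => // _; rewrite invr_ge0 ler0n. Qed.

Lemma Delta_term (D : {set 'I_r} -> R) al be S : al != be -> domin D al be ->
  0 <= (D S - D (tperm al be @: S)) * (gg al S - gg be S).
Proof.
move=> hab hD; rewrite /gg.
case hA: (al \in S); case hB: (be \in S).
- by rewrite subrr mulr0.
- rewrite subr0 mulr_ge0 ?invr_ge0 ?ler0n // subr_ge0; apply: hD; by rewrite ?hA ?hB.
- rewrite sub0r mulr_le0 // ?oppr_le0 ?invr_ge0 ?ler0n // subr_le0.
  have := hD (tperm al be @: S); rewrite !mem_tS tpermL tpermR hA hB tS_invol; exact.
- by rewrite subrr mulr0.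
Qed.

End Pf.
Arguments Dd {R r}. Arguments gg {R r}. Arguments domin {R r}.
Arguments twoDelta {R r}. Arguments Delta_term {R r}. Arguments Dd_dom {R r}.
Arguments Dd_strict {R r}. Arguments sumE {R r}. Arguments m_gt0 {R r}.
Arguments r_eq {R r}. Arguments RA_E {R r}.

Theorem corollary3 (R : realFieldType) (r : nat) (T : ptree R) (alpha : 'I_r) :
  (2 <= r)%N ->
  is_node T ->
  all_edges (fun p : R => 0 <= p <= (r.-1)%:R / r%:R) T ->
  (r%:R)^-1 <= RA_MP r T alpha /\
  (all_edges (fun p : R => p < (r.-1)%:R / r%:R) T ->
   (r%:R)^-1 < RA_MP r T alpha).
Proof.
move=> r1 _ hT.
have dom := Dd_dom T r1 hT.
pose E x := \sum_(S : {set 'I_r}) Dd T alpha S * gg x S.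
have RA : RA_MP r T alpha = E alpha by rewrite RA_E.
have s1 : \sum_x E x = 1 by exact: (sumE T alpha r1).
have key be : be != alpha -> E be <= E alpha.
  move=> hb; have := twoDelta (Dd T alpha) alpha be.
  have : 0 <= \sum_(S : {set 'I_r}) (Dd T alpha S - Dd T alpha (tperm alpha be @: S)) *
                 (gg alpha S - gg be S).
    have hab : alpha != be by rewrite eq_sym.
    by rewrite sumr_ge0 // => S _; apply: Delta_term => //; exact: dom.
  rewrite /E; lra.
have m0 := @m_gt0 R r r1.
have hs : \sum_(x | x != alpha) E alpha = E alpha * (r.-1)%:R.
  by rewrite sumr_const cardC1 card_ord mulr_natr.
move: s1; rewrite (bigD1 alpha) //= => s1.
split.
  rewrite RA -[_^-1]mul1r (@r_eq R r r1).
  rewrite ler_pdivrMr; last by lra.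
  have : \sum_(x | x != alpha) E x <= \sum_(x | x != alpha) E alpha by apply: ler_sum.
  rewrite hs; lra.
move=> hS; rewrite RA -[_^-1]mul1r (@r_eq R r r1).
have keys be : be != alpha -> E be < E alpha.
  move=> hb; have := twoDelta (Dd T alpha) alpha be.
  have hab : alpha != be by rewrite eq_sym.
  have : 0 < \sum_(S : {set 'I_r}) (Dd T alpha S - Dd T alpha (tperm alpha be @: S)) *
                 (gg alpha S - gg be S).
    rewrite (bigD1 [set alpha]) //=.
    have : 0 <= \sum_(S : {set 'I_r} | S != [set alpha]) (Dd T alpha S - Dd T alpha (tperm alpha be @: S)) *
                 (gg alpha S - gg be S).
      by rewrite sumr_ge0 // => S _; apply: Delta_term => //; exact: dom.
    have : 0 < (Dd T alpha [set alpha] - Dd T alpha (tperm alpha be @: [set alpha])) *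
                 (gg alpha [set alpha] - gg be [set alpha]).
      rewrite tS1 /gg !inE eqxx (negbTE hb) cards1 invr1 subr0 mulr1 subr_gt0.
      exact: (Dd_strict T r1 hT hS alpha be hab).
    lra.
  rewrite /E; lra.
rewrite ltr_pdivrMr; last by lra.
have : \sum_(x | x != alpha) E x < \sum_(x | x != alpha) E alpha.
  apply: ltr_sum => //.
  have o0 : (0 < r)%N by apply: ltnW.
  apply/hasP; case: (eqVneq alpha (Ordinal o0)) => h.
    by exists (Ordinal r1); rewrite ?mem_index_enum // h.
  by exists (Ordinal o0); rewrite ?mem_index_enum // eq_sym.
rewrite hs; lra.
Qed.
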